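(* Let $\mathcal A$ be an abelian category and let $0\to F\xrightarrow{i} M\xrightarrow{d} C\to 0$ be a fully invariant short exact sequence in $\mathcal A$. (1) Assume that $M$ is (strongly) self-$F$-split, and let $N$ be a direct summand of $M$ with $F\subseteq N$. Then for every (fully invariant) direct summand $K$ of $M$, $K\cap N$ is a (fully invariant) direct summand of $M$. (2) Assume that $M$ is dual (strongly) self-$F$-split, and let $N$ be a direct summand of $M$ with $N\subseteq F$. Then for every (fully invariant) direct summand $K$ of $M$, $K+N$ is a (fully invariant) direct summand of $M$.
   Context: Convention: each statement containing parenthetical words holds in two versions: one obtained by deleting all parenthetical words and one obtained by keeping all of them. Let $\mathcal A$ be an abelian category. A morphism $s:X\to Y$ is a section if $ts=1_X$ for some $t$, and a retraction if $st=1_Y$ for some $t$. A monomorphism $i:K\to M$ is fully invariant if for every morphism $h:M\to M$ there is $\alpha:K\to K$ with $hi=i\alpha$; an epimorphism $d:M\to C$ is fully coinvariant if for every $h:M\to M$ there is $\beta:C\to C$ with $dh=\beta d$. A subobject is fully invariant if its inclusion is. A short exact sequence $0\to F\xrightarrow{i}N\xrightarrow{d}C\to 0$ is fully invariant if $i$ is fully invariant. A (fully invariant) direct summand is a subobject whose inclusion is a (fully invariant) section. For an object $M$ and a fully invariant short exact sequence $0\to F\xrightarrow{i}N\xrightarrow{d}C\to 0$: $N$ is (strongly) $M$-$F$-split if for every morphism $g:M\to N$, $\ker(dg)$ (equivalently the morphism $P\to M$ in the pullback of $i$ along $g$) is a (fully invariant) section; $N$ is dual (strongly) $M$-$F$-split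 if for every morphism $g:N\to M$, $\mathrm{coker}(gi)$ (equivalently the morphism $M\to Q$ in the pushout of $d$ along $g$) is a (fully coinvariant) retraction. Self-versions: take $M=N$. *)

(* Defs.v *)
From HB Require Import structures.
From mathcomp Require Import all_boot all_algebra.
Set Implicit Arguments. Unset Strict Implicit. Unset Printing Implicit Defensive.
Import GRing.Theory.
Local Open Scope ring_scope.

Record preadditive := PreAdditive {
  Ob : Type;
  Mor : Ob -> Ob -> zmodType;
  idm : forall X, Mor X X;
  comp : forall X Y Z, Mor Y Z -> Mor X Y -> Mor X Z;
  compA : forall X Y Z W (h : Mor Z W) (g : Mor Y Z) (f : Mor X Y),
      comp h (comp g f) = comp (comp h g) f;
  comp1m : forall X Y (f : Mor X Y), comp (idm Y) f = f;
  compm1 : forall X Y (f : Mor X Y), comp f (idm X) = f;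
  compDl : forall X Y Z (g g' : Mor Y Z) (f : Mor X Y),
      comp (g + g') f = comp g f + comp g' f;
  compDr : forall X Y Z (g : Mor Y Z) (f f' : Mor X Y),
      comp g (f + f') = comp g f + comp g f'
}.

Arguments idm {p} X.
Arguments comp {p X Y Z} g f.
Notation "g \oc f" := (comp g f) (at level 40, left associativity).

Section Defs.
Variable C : preadditive.
Local Notation Mor := (@Mor C).

Definition mono {X Y} (f : Mor X Y) : Prop :=
  forall W (g h : Mor W X), f \oc g = f \oc h -> g = h.
Definition epi {X Y} (f : Mor X Y) : Prop :=
  forall W (g h : Mor Y W), g \oc f = h \oc f -> g = h.

Definition is_kernel {A B K} (f : Mor A B) (k : Mor K A) : Prop :=
  f \oc k = 0 /\
  forall X (g : Mor X A), f \oc g = 0 ->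
    exists u : Mor X K, k \oc u = g /\ forall v, k \oc v = g -> v = u.
Definition is_cokernel {A B Q} (f : Mor A B) (c : Mor B Q) : Prop :=
  c \oc f = 0 /\
  forall X (g : Mor B X), g \oc f = 0 ->
    exists u : Mor Q X, u \oc c = g /\ forall v, v \oc c = g -> v = u.

Definition is_zero_object (Z : Ob C) : Prop :=
  forall X, (forall f : Mor X Z, f = 0) /\ (forall f : Mor Z X, f = 0).

Definition is_biproduct {A B P} (i1 : Mor A P) (i2 : Mor B P)
    (p1 : Mor P A) (p2 : Mor P B) : Prop :=
  p1 \oc i1 = idm A /\ p2 \oc i2 = idm B /\
  i1 \oc p1 + i2 \oc p2 = idm P.

Definition is_pullback {A B M P} (f : Mor A M) (g : Mor B M)
    (a : Mor P A) (b : Mor P B) : Prop :=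
  f \oc a = g \oc b /\
  forall X (x : Mor X A) (y : Mor X B), f \oc x = g \oc y ->
    exists u : Mor X P, (a \oc u = x /\ b \oc u = y) /\
      forall v, a \oc v = x -> b \oc v = y -> v = u.

Definition is_abelian : Prop :=
  (exists Z : Ob C, is_zero_object Z) /\
  (forall A B : Ob C, exists P (i1 : Mor A P) (i2 : Mor B P)
       (p1 : Mor P A) (p2 : Mor P B), is_biproduct i1 i2 p1 p2) /\
  (forall A B (f : Mor A B), exists K (k : Mor K A), is_kernel f k) /\
  (forall A B (f : Mor A B), exists Q (c : Mor B Q), is_cokernel f c) /\
  (forall A B (m : Mor A B), mono m -> exists Q (f : Mor B Q), is_kernel f m) /\
  (forall A B (e : Mor A B), epi e -> exists K (f : Mor K A), is_cokernel f e).

Definition section {X Y} (s : Mor X Y) : Prop :=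
  exists t : Mor Y X, t \oc s = idm X.
Definition retraction {X Y} (s : Mor X Y) : Prop :=
  exists t : Mor Y X, s \oc t = idm Y.

Definition fully_invariant {K M} (i : Mor K M) : Prop :=
  mono i /\ forall h : Mor M M, exists alpha : Mor K K, h \oc i = i \oc alpha.
Definition fully_coinvariant {M Cq} (d : Mor M Cq) : Prop :=
  epi d /\ forall h : Mor M M, exists beta : Mor Cq Cq, d \oc h = beta \oc d.

(* The two readings of the parenthetical convention:
   strong = false : words in parentheses deleted,
   strong = true  : words in parentheses kept. *)
Definition opt_fi_section (strong : bool) {X Y} (s : Mor X Y) : Prop :=
  section s /\ (strong -> fully_invariant s).
Definition opt_fc_retraction (strong : bool) {X Y} (s : Mor X Y) : Prop :=
  retraction s /\ (strong -> fully_coinvariant s).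

Definition short_exact {F N Cq} (i : Mor F N) (d : Mor N Cq) : Prop :=
  mono i /\ epi d /\ is_kernel d i.
Definition fully_invariant_ses {F N Cq} (i : Mor F N) (d : Mor N Cq) : Prop :=
  short_exact i d /\ fully_invariant i.

Definition MF_split (strong : bool) (M : Ob C) {F N Cq}
    (i : Mor F N) (d : Mor N Cq) : Prop :=
  forall (g : Mor M N) (Kr : Ob C) (k : Mor Kr M),
    is_kernel (d \oc g) k -> opt_fi_section strong k.
Definition dual_MF_split (strong : bool) (M : Ob C) {F N Cq}
    (i : Mor F N) (d : Mor N Cq) : Prop :=
  forall (g : Mor N M) (Q : Ob C) (c : Mor M Q),
    is_cokernel (g \oc i) c -> opt_fc_retraction strong c.

Definition self_F_split (strong : bool) {F M Cq}
    (i : Mor F M) (d : Mor M Cq) : Prop := MF_split strong M i d.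
Definition dual_self_F_split (strong : bool) {F M Cq}
    (i : Mor F M) (d : Mor M Cq) : Prop := dual_MF_split strong M i d.

End Defs.

(* Main.v *)
Require Import Defs.
From mathcomp Require Import all_boot all_algebra.
Import GRing.Theory.
Local Open Scope ring_scope.

Section Aux.
Variable C : preadditive.

Lemma comp0l (X Y Z : Ob C) (f : Mor X Y) : (0 : Mor Y Z) \oc f = 0.
Proof.
have H := compDl (0 : Mor Y Z) 0 f; rewrite addr0 in H.
by apply: (addrI (0 \oc f)); rewrite -H addr0.
Qed.

Lemma comp0r (X Y Z : Ob C) (g : Mor Y Z) : g \oc (0 : Mor X Y) = 0.
Proof.
have H := compDr g (0 : Mor X Y) 0; rewrite addr0 in H.
by apply: (addrI (g \oc 0)); rewrite -H addr0.
Qed.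

Lemma compNl (X Y Z : Ob C) (g : Mor Y Z) (f : Mor X Y) : (- g) \oc f = - (g \oc f).
Proof. by apply/eqP; rewrite -addr_eq0 -compDl addNr comp0l. Qed.

Lemma compNr (X Y Z : Ob C) (g : Mor Y Z) (f : Mor X Y) : g \oc (- f) = - (g \oc f).
Proof. by apply/eqP; rewrite -addr_eq0 -compDr addNr comp0r. Qed.

Lemma compBl (X Y Z : Ob C) (g g' : Mor Y Z) (f : Mor X Y) :
  (g - g') \oc f = g \oc f - g' \oc f.
Proof. by rewrite compDl compNl. Qed.

Lemma compBr (X Y Z : Ob C) (g : Mor Y Z) (f f' : Mor X Y) :
  g \oc (f - f') = g \oc f - g \oc f'.
Proof. by rewrite compDr compNr. Qed.

Lemma compAK (X Y Z W : Ob C) (a : Mor Z W) (b : Mor Y Z) (c : Mor Y W) :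
  a \oc b = c -> forall V (h : Mor V Y), a \oc (b \oc h) = c \oc h.
Proof. by move=> H V h; rewrite Defs.compA H. Qed.

Lemma compK (X Y : Ob C) (a : Mor Y X) (b : Mor X Y) :
  a \oc b = idm X -> forall V (h : Mor V X), a \oc (b \oc h) = h.
Proof. by move=> H V h; rewrite Defs.compA H comp1m. Qed.

Lemma section_mono (X Y : Ob C) (s : Mor X Y) : section s -> mono s.
Proof.
move=> [t Ht] W g h H.
by rewrite -(comp1m g) -(comp1m h) -Ht -!Defs.compA H.
Qed.

End Aux.
Arguments comp0l {C X Y Z}. Arguments comp0r {C X Y Z}.
Arguments compNl {C X Y Z}. Arguments compNr {C X Y Z}.
Arguments compBl {C X Y Z}. Arguments compBr {C X Y Z}.
Arguments compAK {C X Y Z W a b c}. Arguments compK {C X Y a b}. Arguments section_mono {C X Y s}.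
Theorem proposition3p6 (C : preadditive) (HC : is_abelian C) (strong : bool)
    (F M Cq : Ob C) (i : Mor F M) (d : Mor M Cq)
    (Hses : fully_invariant_ses i d) :
  (* (1) *)
  (self_F_split strong i d ->
   forall (N : Ob C) (n : Mor N M), section n ->
   (exists u : Mor F N, n \oc u = i) ->
   forall (K : Ob C) (k : Mor K M), opt_fi_section strong k ->
   forall (P : Ob C) (a : Mor P K) (b : Mor P N), is_pullback k n a b ->
   opt_fi_section strong (k \oc a))
  /\
  (* (2) *)
  (dual_self_F_split strong i d ->
   forall (N : Ob C) (n : Mor N M), section n ->
   (exists u : Mor N F, i \oc u = n) ->
   forall (K : Ob C) (k : Mor K M), opt_fi_section strong k ->
   forall (P : Ob C) (i1 : Mor K P) (i2 : Mor N P) (p1 : Mor P K) (p2 : Mor P N),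
     is_biproduct i1 i2 p1 p2 ->
   forall (S : Ob C) (e : Mor P S) (s : Mor S M),
     epi e -> mono s -> k \oc p1 + n \oc p2 = s \oc e ->
   opt_fi_section strong s).
Proof.
have [_ [_ [Hkex [Hcokex [Hmk _]]]]] := HC.
move: Hses => [[Hmi [Hepid [Hdi Hker]]] _].
split.
- move=> Hsplit N n [n' Hn'n] [u Hu] K k [[t Htk] Hkfi] P a b [Hpb Hpbu].
  have [L [l Hl]] := Hkex M Cq (d \oc ((idm M - k \oc t) \oc (n \oc n'))).
  have [[rL HrL] Hlfi] := Hsplit _ L l Hl.
  have Hgl : d \oc ((idm M - k \oc t) \oc (n \oc (n' \oc l))) = 0.
    by move: Hl => [H _]; rewrite !Defs.compA in H *.
  have [w [Hw _]] := Hker _ _ Hgl.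
  rewrite -Hu -Defs.compA compBl comp1m in Hw.
  have HefL : k \oc (t \oc (n \oc (n' \oc l))) = n \oc (n' \oc l) - n \oc (u \oc w).
    by rewrite Hw -Defs.compA opprB addrC subrK.
  have HefL' : forall V (h : Mor V L), k \oc (t \oc (n \oc (n' \oc (l \oc h)))) =
      n \oc (n' \oc (l \oc h)) - n \oc (u \oc (w \oc h)).
    move=> V h; move: (congr1 (fun z => z \oc h) HefL).
    by rewrite compBl -!Defs.compA.
  have Heq : k \oc (t \oc (n \oc (n' \oc (l \oc rL)))) =
      n \oc (n' \oc (k \oc (t \oc (n \oc (n' \oc (l \oc rL)))))).
    by rewrite HefL' !compBr !(compK Hn'n).
  have [r [[Har Hbr] _]] := Hpbu _ _ _ Heq.
  have Hz0 : (d \oc ((idm M - k \oc t) \oc (n \oc n'))) \oc (k \oc a) = 0.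
    rewrite -!Defs.compA Hpb (compK Hn'n) -Hpb compBl comp1m.
    by rewrite -Defs.compA (compK Htk) subrr comp0r.
  have [z [Hz _]] := Hl.2 _ _ Hz0.
  have Hsec : section (k \oc a).
    exists r.
    have [u0 [_ Hu0]] := Hpbu _ a b Hpb.
    rewrite (Hu0 (idm P)) ?compm1 //; apply: Hu0.
    - rewrite Defs.compA Har -Hz -!Defs.compA (compK HrL) Hz Hpb.
      by rewrite (compK Hn'n) -Hpb (compK Htk).
    - rewrite Defs.compA Hbr -Hz -!Defs.compA (compK HrL) Hz Hpb.
      rewrite (compK Hn'n) -Hpb (compK Htk) Hpb.
      by rewrite (compK Hn'n).
  split => // Hs.
  have [_ Hkh] := Hkfi Hs.
  split; first exact: section_mono Hsec.
  move=> h.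
  have [L2 [l2 Hl2]] := Hkex M Cq (d \oc (idm M - n \oc (n' \oc (k \oc t)))).
  have [_ Hl2fi] := Hsplit _ L2 l2 Hl2.
  have [_ Hl2h] := Hl2fi Hs.
  have Hz20 : (d \oc (idm M - n \oc (n' \oc (k \oc t)))) \oc (k \oc a) = 0.
    rewrite -!Defs.compA compBl comp1m -!Defs.compA (compK Htk) Hpb (compK Hn'n).
    by rewrite subrr comp0r.
  have [z2 [Hz2 _]] := Hl2.2 _ _ Hz20.
  have [be Hbe] := Hkh h.
  have [ga Hga] := Hl2h h.
  have Hkt : k \oc (t \oc (h \oc (k \oc a))) = h \oc (k \oc a).
    by rewrite (Defs.compA h) Hbe -(Defs.compA k) (compK Htk).
  have Hy0 : d \oc ((idm M - n \oc (n' \oc (k \oc t))) \oc (h \oc (k \oc a))) = 0.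
    rewrite -Hz2 (Defs.compA h) Hga -(Defs.compA l2) !Defs.compA.
    by move: Hl2 => [H _]; rewrite !Defs.compA in H; rewrite H !comp0l.
  have [v [Hv _]] := Hker _ _ Hy0.
  rewrite compBl comp1m -!Defs.compA Hkt in Hv.
  have Hiv : i \oc v = 0.
    have H0 : n \oc (n' \oc (i \oc v)) = 0 by rewrite Hv !compBr (compK Hn'n) subrr.
    by move: H0; rewrite -Hu -!Defs.compA (compK Hn'n).
  have Hny : k \oc (t \oc (h \oc (k \oc a))) = n \oc (n' \oc (h \oc (k \oc a))).
    by rewrite Hkt; apply/eqP; rewrite -subr_eq0 -Hv Hiv.
  have [al [[Hal _] _]] := Hpbu _ _ _ Hny.
  by exists al; rewrite -Defs.compA Hal Hkt.
- move=> Hsplit N n [n' Hn'n] [u Hu] K k [[t Htk] Hkfi] P i1 i2 p1 p2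
    [Hb1 [Hb2 Hb3]] S e s He Hs Hse.
  have Hp2i1 : p2 \oc i1 = 0.
    have H := congr1 (fun z => p2 \oc (z \oc i1)) Hb3.
    rewrite /= comp1m compDl compDr -!Defs.compA Hb1 compm1 (compK Hb2) in H.
    by apply: (addrI (p2 \oc i1)); rewrite addr0 H.
  have Hp1i2 : p1 \oc i2 = 0.
    have H := congr1 (fun z => p1 \oc (z \oc i2)) Hb3.
    rewrite /= comp1m compDl compDr -!Defs.compA Hb2 compm1 (compK Hb1) in H.
    by apply: (addrI (p1 \oc i2)); rewrite addr0 H.
  have Hsk : s \oc (e \oc i1) = k.
    by rewrite Defs.compA -Hse compDl -!Defs.compA Hb1 Hp2i1 compm1 comp0r addr0.
  have Hsn : s \oc (e \oc i2) = n.
    by rewrite Defs.compA -Hse compDl -!Defs.compA Hb2 Hp1i2 compm1 comp0r add0r.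
  set g := (idm M - k \oc t) \oc (n \oc n').
  have [Q [c Hc]] := Hcokex F M (g \oc i).
  have [[sg Hsg] Hcfc] := Hsplit g Q c Hc.
  have [Z [f0 Hf0]] := Hmk _ _ s Hs.
  have Hf0k : f0 \oc k = 0 by rewrite -Hsk Defs.compA Hf0.1 comp0l.
  have Hf0n : f0 \oc n = 0 by rewrite -Hsn Defs.compA Hf0.1 comp0l.
  have Hf0g : f0 \oc (g \oc i) = 0.
    rewrite /g compBl (comp1m (n \oc n')) compBl compBr.
    by rewrite !Defs.compA Hf0k Hf0n !comp0l subrr.
  have [w [Hw _]] := Hc.2 _ _ Hf0g.
  have Hgn : g \oc (i \oc u) = (idm M - k \oc t) \oc n.
    by rewrite Hu /g -!Defs.compA Hn'n compm1.
  have Hcg : c \oc (g \oc i) = 0 by rewrite Hc.1.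
  have Hcg' : c \oc (g \oc (i \oc u)) = 0 by rewrite (Defs.compA g) Defs.compA Hcg comp0l.
  set pi := k \oc t + (idm M - sg \oc c) \oc (idm M - k \oc t).
  have Hf0pi : f0 \oc pi = 0.
    rewrite /pi compDr Defs.compA Hf0k comp0l add0r -Hw compBl comp1m.
    rewrite -(Defs.compA w) compBr -(Defs.compA sg c) (Defs.compA c sg) Hsg comp1m.
    by rewrite subrr comp0r.
  have [rho [Hrho _]] := Hf0.2 _ _ Hf0pi.
  have Hpik : pi \oc k = k.
    have Hk0 : (idm M - k \oc t) \oc k = 0.
      by rewrite compBl comp1m -Defs.compA Htk compm1 subrr.
    by rewrite /pi compDl -!Defs.compA Htk compm1 Hk0 !comp0r addr0.
  have Hpin : pi \oc n = n.
    rewrite /pi compDl -(Defs.compA (idm M - sg \oc c)) -Hgn compBl.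
    rewrite (comp1m (g \oc (i \oc u))) -(Defs.compA sg c) Hcg' comp0r subr0 Hgn.
    by rewrite compBl (comp1m n) addrC subrK.
  have Hpis : pi \oc s = s.
    apply: He; rewrite -Defs.compA -Hse compDr !Defs.compA Hpik Hpin //.
  have Hsec : section s.
    exists rho; apply: Hs; rewrite Defs.compA Hrho Hpis compm1 //.
  split => // Hst.
  split => // h.
  have [_ Hkh] := Hkfi Hst.
  have [_ Hch] := Hcfc Hst.
  have [be Hbe] := Hch h.
  have [bk Hbk] := Hkh h.
  have Hhk : f0 \oc (h \oc k) = 0 by rewrite Hbk Defs.compA Hf0k comp0l.
  have Hn_dec : n = k \oc (t \oc n) + g \oc (i \oc u).
    by rewrite Hgn compBl (comp1m n) Defs.compA addrC subrK.
  have Hhn : f0 \oc (h \oc n) = 0.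
    rewrite Hn_dec !compDr (Defs.compA h k) Hbk -(Defs.compA k) (Defs.compA f0 k) Hf0k comp0l add0r.
    by rewrite -Hw -(Defs.compA w) (Defs.compA c h) Hbe -(Defs.compA be) Hcg' !comp0r.
  have Hf0h : f0 \oc (h \oc s) = 0.
    apply: He; rewrite comp0l -!Defs.compA -Hse !compDr !Defs.compA.
    by rewrite -(Defs.compA f0 h k) Hhk -(Defs.compA f0 h n) Hhn !comp0l addr0.
  have [al [Hal _]] := Hf0.2 _ _ Hf0h.
  by exists al.
Qed.
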